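(* Let $m\geq 2$ be an integer and $m<p<2m$. For every $n\geq1$ and every $m$-homogeneous polynomial $P:\ell_p^n\to\mathbb{K}$, $P(x_1,\ldots,x_n)=\sum_{|\alpha|=m}a_\alpha\mathbf{x}^\alpha$, we have \[ \Big(\sum_{|\alpha|=m}|a_\alpha|^{\frac{p}{p-m}}\Big)^{\frac{p-m}{p}}\leq C^{\mathrm{mult}}_{\mathbb{K},m,p}\,\frac{m^m}{(m!)^{\frac{p-m}{p}}}\,\|P\|. \] In particular, the optimal constant $C^{\mathrm{pol}}_{\mathbb{K},m,p}$ (the smallest constant $C$ such that $\big(\sum_{|\alpha|=m}|a_\alpha|^{p/(p-m)}\big)^{(p-m)/p}\le C\|P\|$ for all such $P$ and all $n$) satisfies $C^{\mathrm{pol}}_{\mathbb{K},m,p}\leq C^{\mathrm{mult}}_{\mathbb{K},m,p}\frac{m^m}{(m!)^{(p-m)/p}}$.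
   Context: $\mathbb{K}$ denotes $\mathbb{R}$ or $\mathbb{C}$. For a multi-index $\alpha=(\alpha_1,\ldots,\alpha_n)\in\mathbb{N}^n$ (entries nonnegative integers), $|\alpha|=\alpha_1+\cdots+\alpha_n$ and $\mathbf{x}^\alpha=x_1^{\alpha_1}\cdots x_n^{\alpha_n}$. $\ell_p^n$ is $\mathbb{K}^n$ with the $p$-norm. For a polynomial $P$ on $\ell_p^n$, $\|P\|=\sup\{|P(x)|:\|x\|_p\le1\}$; for an $m$-linear form $T:\ell_p^n\times\cdots\times\ell_p^n\to\mathbb{K}$, $\|T\|=\sup\{|T(x^{(1)},\ldots,x^{(m)})|:\|x^{(i)}\|_p\le1\}$. $e_j$ denotes the canonical unit vectors. For $m<p<2m$, $C^{\mathrm{mult}}_{\mathbb{K},m,p}$ denotes the smallest constant $C$ such that $\big(\sum_{j_1,\ldots,j_m=1}^n|T(e_{j_1},\ldots,e_{j_m})|^{\frac{p}{p-m}}\big)^{\frac{p-m}{p}}\le C\|T\|$ for all $m$-linear forms $T:\ell_p^n\times\cdots\times\ell_p^n\to\mathbb{K}$ and all $n\ge1$ (this constant is known to be finite, at most $(\sqrt2)^{m-1}$). *)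

(* Defs.v *)
From Stdlib Require Import Reals Lra List Arith.
Import ListNotations.
Open Scope R_scope.

(* ---------- Scalars: K = R or C, both embedded in a minimal complex type ---------- *)
Record Cx := mkC { Re : R; Im : R }.
Definition C0 : Cx := mkC 0 0.
Definition C1 : Cx := mkC 1 0.
Definition Cadd (z w : Cx) : Cx := mkC (Re z + Re w) (Im z + Im w).
Definition Cmul (z w : Cx) : Cx :=
  mkC (Re z * Re w - Im z * Im w) (Re z * Im w + Im z * Re w).
Definition Cabs (z : Cx) : R := sqrt (Re z * Re z + Im z * Im z).
Fixpoint Cpow (z : Cx) (k : nat) : Cx :=
  match k with O => C1 | S k' => Cmul z (Cpow z k') end.
Definition Csum {A : Type} (f : A -> Cx) (l : list A) : Cx :=
  fold_right (fun a acc => Cadd (f a) acc) C0 l.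
Definition Rsum {A : Type} (f : A -> R) (l : list A) : R :=
  fold_right (fun a acc => f a + acc) 0 l.

Inductive field_kind := RealK | ComplexK.
Definition inK (K : field_kind) (z : Cx) : Prop :=
  match K with RealK => Im z = 0 | ComplexK => True end.

(* Real power x^y for x >= 0 (with 0^y = 0, y > 0). *)
Definition rpow (x y : R) : R := if Rlt_dec 0 x then Rpower x y else 0.

(* ---------- Vectors of K^n: functions nat -> Cx supported on {0,...,n-1} ---------- *)
Definition vec := nat -> Cx.
Definition isvec (K : field_kind) (n : nat) (x : vec) : Prop :=
  (forall j, (j < n)%nat -> inK K (x j)) /\ (forall j, (n <= j)%nat -> x j = C0).
Definition vadd (x y : vec) : vec := fun j => Cadd (x j) (y j).
Definition vscal (c : Cx) (x : vec) : vec := fun j => Cmul c (x j).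

Definition lp_norm (p : R) (n : nat) (x : vec) : R :=
  rpow (Rsum (fun j => rpow (Cabs (x j)) p) (seq 0 n)) (1 / p).

(* canonical unit vector e_j (0-based index) *)
Definition unitv (j : nat) : vec := fun k => if Nat.eqb k j then C1 else C0.

Definition mlinear (K : field_kind) (n m : nat) (T : list vec -> Cx) : Prop :=
  (forall X, length X = m -> (forall x, In x X -> isvec K n x) -> inK K (T X)) /\
  (forall l1 l2 y z c,
      (length l1 + S (length l2) = m)%nat ->
      (forall x, In x l1 -> isvec K n x) -> (forall x, In x l2 -> isvec K n x) ->
      isvec K n y -> isvec K n z -> inK K c ->
      T (l1 ++ vadd (vscal c y) z :: l2) =
        Cadd (Cmul c (T (l1 ++ y :: l2))) (T (l1 ++ z :: l2))).

(* M is an upper bound of |T| on the product of unit balls (so ||T|| <= M) *)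
Definition mlin_bound (K : field_kind) (n m : nat) (p : R) (T : list vec -> Cx) (M : R) : Prop :=
  forall X, length X = m -> (forall x, In x X -> isvec K n x /\ lp_norm p n x <= 1) ->
    Cabs (T X) <= M.

Fixpoint tuples (n m : nat) : list (list nat) :=
  match m with
  | O => [[]]
  | S m' => flat_map (fun j => map (cons j) (tuples n m')) (seq 0 n)
  end.

(* C is an admissible constant in the multilinear inequality (for all n >= 1, all T);
   C^mult_{K,m,p} is the least such constant. *)
Definition mult_admissible (K : field_kind) (m : nat) (p C : R) : Prop :=
  forall (n : nat) (T : list vec -> Cx) (M : R),
    (1 <= n)%nat -> mlinear K n m T -> mlin_bound K n m p T M ->
    rpow (Rsum (fun js => rpow (Cabs (T (map unitv js))) (p / (p - INR m))) (tuples n m))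
         ((p - INR m) / p) <= C * M.

Fixpoint multi (n m : nat) : list (list nat) :=
  match n with
  | O => match m with O => [[]] | S _ => [] end
  | S n' => flat_map (fun k => map (cons k) (multi n' (m - k))) (seq 0 (S m))
  end.

Fixpoint monom_from (i : nat) (alpha : list nat) (x : vec) : Cx :=
  match alpha with
  | [] => C1
  | k :: rest => Cmul (Cpow (x i) k) (monom_from (S i) rest x)
  end.
Definition monom (alpha : list nat) (x : vec) : Cx := monom_from 0 alpha x.

Definition poly_eval (n m : nat) (a : list nat -> Cx) (x : vec) : Cx :=
  Csum (fun alpha => Cmul (a alpha) (monom alpha x)) (multi n m).

(* M is an upper bound of |P| on the unit ball of l_p^n (so ||P|| <= M) *)
Definition poly_bound (K : field_kind) (n : nat) (p : R) (P : vec -> Cx) (M : R) : Prop :=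
  forall x, isvec K n x -> lp_norm p n x <= 1 -> Cabs (P x) <= M.

(* Main.v *)
From Stdlib Require Import Reals Lra Lia List Arith Permutation FunctionalExtensionality ClassicalEpsilon Classical.
Require Import Defs.
Import ListNotations.
Open Scope R_scope.

Lemma Cx_eq : forall z w, Re z = Re w -> Im z = Im w -> z = w.
Proof. intros [a b] [c d]; simpl; intros; subst; reflexivity. Qed.

Definition Copp z := mkC (- Re z) (- Im z).
Definition Csub z w := Cadd z (Copp w).
Lemma Cring : ring_theory C0 C1 Cadd Cmul Csub Copp (@eq Cx).
Proof. constructor; intros; apply Cx_eq; unfold Cadd, Cmul, Csub, Copp, C0, C1; simpl; ring. Qed.
Add Ring Cxring : Cring.

Definition Cr (r : R) : Cx := mkC r 0.
Lemma Cr_add a b : Cr (a + b) = Cadd (Cr a) (Cr b).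
Proof. apply Cx_eq; unfold Cr, Cadd; simpl; ring. Qed.
Lemma Cr_mul a b : Cr (a * b) = Cmul (Cr a) (Cr b).
Proof. apply Cx_eq; unfold Cr, Cmul; simpl; ring. Qed.
Lemma Cr0 : Cr 0 = C0. Proof. reflexivity. Qed.
Lemma Cr1 : Cr 1 = C1. Proof. reflexivity. Qed.

Lemma Cabs_ge0 z : 0 <= Cabs z.
Proof. unfold Cabs; apply sqrt_pos. Qed.
Lemma Cabs_Cr r : Cabs (Cr r) = Rabs r.
Proof. unfold Cabs, Cr; simpl. rewrite Rmult_0_l, Rplus_0_r. apply sqrt_Rsqr_abs. Qed.
Lemma Cabs_C0 : Cabs C0 = 0.
Proof. rewrite <- Cr0, Cabs_Cr, Rabs_R0; reflexivity. Qed.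
Lemma Cabs_mul z w : Cabs (Cmul z w) = Cabs z * Cabs w.
Proof.
  destruct z as [a b], w as [c d]; unfold Cabs, Cmul; simpl.
  assert (0 <= a*a+b*b) by nra. assert (0 <= c*c+d*d) by nra.
  rewrite <- (sqrt_mult (a*a+b*b) (c*c+d*d)) by assumption. f_equal; ring.
Qed.
Lemma sq0 x : 0 <= x * x. Proof. apply (Rle_0_sqr x). Qed.
Lemma Cabs_add z w : Cabs (Cadd z w) <= Cabs z + Cabs w.
Proof.
  destruct z as [a b], w as [c d]; unfold Cabs, Cadd; simpl.
  pose proof (sq0 a); pose proof (sq0 b); pose proof (sq0 c); pose proof (sq0 d).
  pose proof (sq0 (a+c)); pose proof (sq0 (b+d)); pose proof (sq0 (a*d-b*c)).
  assert (Ha : 0 <= a*a+b*b) by lra. assert (Hc : 0 <= c*c+d*d) by lra.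
  pose proof (sqrt_pos (a*a+b*b)) as S1. pose proof (sqrt_pos (c*c+d*d)) as S2.
  apply Rsqr_incr_0_var; [| lra].
  unfold Rsqr. rewrite (sqrt_sqrt ((a+c)*(a+c)+(b+d)*(b+d))) by lra.
  replace ((sqrt (a * a + b * b) + sqrt (c * c + d * d)) *
    (sqrt (a * a + b * b) + sqrt (c * c + d * d))) with
    (sqrt (a * a + b * b)*sqrt (a * a + b * b) + sqrt (c * c + d * d)*sqrt (c * c + d * d)
     + 2 * (sqrt (a * a + b * b) * sqrt (c * c + d * d))) by ring.
  rewrite !sqrt_sqrt by assumption. rewrite <- sqrt_mult by assumption.
  assert (a*c+b*d <= sqrt ((a*a+b*b)*(c*c+d*d))).
  { destruct (Rle_or_lt (a*c+b*d) 0). apply Rle_trans with 0; auto; apply sqrt_pos.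
    apply Rsqr_incr_0_var; [|apply sqrt_pos]. unfold Rsqr. rewrite sqrt_sqrt by (apply Rmult_le_pos; assumption).
    nra. }
  nra.
Qed.
Lemma Cabs_C1 : Cabs C1 = 1.
Proof. rewrite <- Cr1, Cabs_Cr, Rabs_R1; reflexivity. Qed.

Section Sums.
Context {A : Type}.
Lemma Csum_nil (f : A -> Cx) : Csum f [] = C0. Proof. reflexivity. Qed.
Lemma Csum_cons (f : A -> Cx) a l : Csum f (a :: l) = Cadd (f a) (Csum f l). Proof. reflexivity. Qed.
Lemma Csum_app (f : A -> Cx) l1 l2 : Csum f (l1 ++ l2) = Cadd (Csum f l1) (Csum f l2).
Proof. induction l1; unfold Csum in *; simpl. ring. rewrite IHl1. ring. Qed.
Lemma Csum_ext_in (f g : A -> Cx) l : (forall x, In x l -> f x = g x) -> Csum f l = Csum g l.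
Proof. induction l; intros H; unfold Csum in *; simpl; auto.
  rewrite H by (left; auto). rewrite IHl; auto. intros; apply H; right; auto. Qed.
Lemma Csum_add (f g : A -> Cx) l : Csum (fun x => Cadd (f x) (g x)) l = Cadd (Csum f l) (Csum g l).
Proof. induction l; simpl. unfold Csum; simpl; apply Cx_eq; unfold Cadd, C0; simpl; ring.
  unfold Csum in *; simpl. rewrite IHl. ring. Qed.
Lemma Csum_mul_l c (f : A -> Cx) l : Cmul c (Csum f l) = Csum (fun x => Cmul c (f x)) l.
Proof. induction l; unfold Csum in *; simpl. apply Cx_eq; unfold Cmul, C0; simpl; ring.
  rewrite <- IHl. ring. Qed.
Lemma Csum_zero (l : list A) : Csum (fun _ => C0) l = C0.
Proof. induction l; unfold Csum in *; simpl; auto. rewrite IHl; ring. Qed.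
Lemma Csum_perm (f : A -> Cx) l l' : Permutation l l' -> Csum f l = Csum f l'.
Proof. induction 1; unfold Csum in *; simpl; auto. rewrite IHPermutation; auto. ring. congruence. Qed.
Lemma Rsum_app (f : A -> R) l1 l2 : Rsum f (l1 ++ l2) = Rsum f l1 + Rsum f l2.
Proof. induction l1; unfold Rsum in *; simpl. ring. rewrite IHl1. ring. Qed.
Lemma Rsum_ext_in (f g : A -> R) l : (forall x, In x l -> f x = g x) -> Rsum f l = Rsum g l.
Proof. induction l; intros H; unfold Rsum in *; simpl; auto.
  rewrite H by (left; auto). rewrite IHl; auto. intros; apply H; right; auto. Qed.
Lemma Rsum_le (f g : A -> R) l : (forall x, In x l -> f x <= g x) -> Rsum f l <= Rsum g l.
Proof. induction l; intros H; unfold Rsum in *; simpl. lra.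
  apply Rplus_le_compat. apply H; left; auto. apply IHl; intros; apply H; right; auto. Qed.
Lemma Rsum_nonneg (f : A -> R) l : (forall x, In x l -> 0 <= f x) -> 0 <= Rsum f l.
Proof. induction l; intros H; unfold Rsum in *; simpl. lra.
  apply Rplus_le_le_0_compat. apply H; left; auto. apply IHl; intros; apply H; right; auto. Qed.
Lemma Rsum_mul_l c (f : A -> R) l : c * Rsum f l = Rsum (fun x => c * f x) l.
Proof. induction l; unfold Rsum in *; simpl. ring. rewrite <- IHl. ring. Qed.
Lemma Rsum_add (f g : A -> R) l : Rsum (fun x => f x + g x) l = Rsum f l + Rsum g l.
Proof. induction l; unfold Rsum in *; simpl. ring. rewrite IHl. ring. Qed.
Lemma Rsum_const c (l : list A) : Rsum (fun _ => c) l = INR (length l) * c.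
Proof. induction l; unfold Rsum in *; simpl length. simpl; ring. rewrite S_INR. simpl. rewrite IHl. ring. Qed.
Lemma Cabs_Csum (f : A -> Cx) l : Cabs (Csum f l) <= Rsum (fun x => Cabs (f x)) l.
Proof. induction l; unfold Csum, Rsum in *; simpl. rewrite Cabs_C0; lra.
  eapply Rle_trans. apply Cabs_add. lra. Qed.
Lemma Csum_Cr (f : A -> R) l : Csum (fun x => Cr (f x)) l = Cr (Rsum f l).
Proof. induction l; unfold Csum, Rsum in *; simpl; auto. rewrite IHl, Cr_add; auto. Qed.
End Sums.

Lemma Csum_map {A B} (f : B -> Cx) (g : A -> B) l : Csum f (map g l) = Csum (fun x => f (g x)) l.
Proof. induction l; unfold Csum in *; simpl; auto. rewrite IHl; auto. Qed.
Lemma Csum_flat_map {A B} (f : B -> Cx) (g : A -> list B) l :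
  Csum f (flat_map g l) = Csum (fun x => Csum f (g x)) l.
Proof. induction l; simpl; auto. rewrite Csum_app, IHl; auto. Qed.
Lemma Csum_swap {A B} (f : A -> B -> Cx) l1 l2 :
  Csum (fun x => Csum (fun y => f x y) l2) l1 = Csum (fun y => Csum (fun x => f x y) l1) l2.
Proof. induction l1. simpl. symmetry; apply Csum_zero.
  rewrite Csum_cons, IHl1. rewrite <- Csum_add. apply Csum_ext_in; intros; rewrite Csum_cons; auto. Qed.
Lemma Rsum_map {A B} (f : B -> R) (g : A -> B) l : Rsum f (map g l) = Rsum (fun x => f (g x)) l.
Proof. induction l; unfold Rsum in *; simpl; auto. rewrite IHl; auto. Qed.
Lemma Rsum_flat_map {A B} (f : B -> R) (g : A -> list B) l :
  Rsum f (flat_map g l) = Rsum (fun x => Rsum f (g x)) l.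
Proof. induction l; simpl; auto. rewrite Rsum_app, IHl; auto. Qed.

Definition dec (P : Prop) : bool := if excluded_middle_informative P then true else false.
Lemma dec_true P : dec P = true <-> P.
Proof. unfold dec; destruct (excluded_middle_informative P); split; intros; auto; discriminate. Qed.
Lemma dec_ext (P Q : Prop) : (P <-> Q) -> dec P = dec Q.
Proof. intros H; unfold dec; destruct (excluded_middle_informative P), (excluded_middle_informative Q); tauto. Qed.

Lemma NoDup_flat_cons {A : Type} (l : list A) (g : A -> list (list A)) :
  NoDup l -> (forall j, NoDup (g j)) -> NoDup (flat_map (fun j => map (cons j) (g j)) l).
Proof.
  induction 1 as [|a l Ha Hl IH]; intros Hg; simpl. constructor.
  apply NoDup_app. apply FinFun.Injective_map_NoDup. intros x y E; injection E; auto. apply Hg.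
  apply IH; auto.
  intros x Hx1 Hx2. apply in_map_iff in Hx1. destruct Hx1 as [y [<- _]].
  apply in_flat_map in Hx2. destruct Hx2 as [b [Hb Hb2]]. apply in_map_iff in Hb2.
  destruct Hb2 as [z [E _]]. injection E; intros; subst; auto.
Qed.

Lemma tuples_In n m js : In js (tuples n m) <-> length js = m /\ (forall x, In x js -> (x < n)%nat).
Proof.
  revert js; induction m; intros js; simpl.
  - split. intros [<-|[]]; split; simpl; auto; intros x []. intros [H _]; destruct js; [left; auto| discriminate].
  - rewrite in_flat_map. split.
    + intros [j [Hj Hm]]. apply in_map_iff in Hm. destruct Hm as [t [<- Ht]]. apply IHm in Ht.
      apply in_seq in Hj. destruct Ht as [Ht1 Ht2]. split. simpl; auto.
      intros x [<-|Hx]; [lia| auto].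
    + intros [Hl Hx]. destruct js as [|j t]; [discriminate|]. exists j. split.
      apply in_seq. specialize (Hx j (or_introl eq_refl)). lia.
      apply in_map. apply IHm. split. simpl in Hl; lia. intros; apply Hx; right; auto.
Qed.

Lemma tuples_NoDup n m : NoDup (tuples n m).
Proof. induction m; simpl. constructor; auto. constructor. apply NoDup_flat_cons; auto. apply seq_NoDup. Qed.

Lemma length_flat_cons {A : Type} (l : list A) (L : list (list A)) :
  length (flat_map (fun j => map (cons j) L) l) = (length l * length L)%nat.
Proof. induction l; simpl; auto. rewrite length_app, length_map, IHl; lia. Qed.

Lemma tuples_length n m : length (tuples n m) = (n ^ m)%nat.
Proof. induction m; simpl; auto. rewrite length_flat_cons, length_seq, IHm; auto. Qed.

Lemma multi_In n m alpha : In alpha (multi n m) <-> length alpha = n /\ list_sum alpha = m.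
Proof.
  revert m alpha; induction n; intros m alpha; cbn [multi].
  - destruct m; simpl. split. intros [<-|[]]; auto. intros [H1 H2]; destruct alpha; [left; auto|discriminate].
    split. intros []. intros [H1 H2]; destruct alpha; [simpl in H2; discriminate| discriminate].
  - rewrite in_flat_map. split.
    + intros [k [Hk Hm]]. apply in_map_iff in Hm. destruct Hm as [t [<- Ht]]. apply IHn in Ht.
      apply in_seq in Hk. simpl. lia.
    + intros [Hl Hs]. destruct alpha as [|k t]; [discriminate|]. unfold list_sum in *; simpl in Hl, Hs. exists k. split.
      apply in_seq. lia. apply in_map. apply IHn. lia.
Qed.

Lemma multi_NoDup n m : NoDup (multi n m).
Proof. revert m; induction n; intros m; cbn [multi]. destruct m; constructor; auto; constructor.
  apply NoDup_flat_cons; auto. apply seq_NoDup. Qed.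

Definition nsum {A} (f : A -> nat) (l : list A) : nat := list_sum (map f l).
Lemma nsum_add {A} (f g : A -> nat) l : nsum (fun x => f x + g x)%nat l = (nsum f l + nsum g l)%nat.
Proof. induction l; unfold nsum in *; simpl; auto. rewrite IHl; lia. Qed.
Lemma nsum_ind n a : nsum (fun j => if Nat.eq_dec a j then 1%nat else 0%nat) (seq 0 n) = if (a <? n)%nat then 1%nat else 0%nat.
Proof.
  induction n. simpl; auto. rewrite seq_S. unfold nsum in *. rewrite map_app, list_sum_app, IHn. simpl.
  destruct (Nat.eq_dec a n); subst.
  - rewrite Nat.ltb_irrefl. assert (n <? S n = true)%nat by (apply Nat.ltb_lt; lia). rewrite H; auto.
  - destruct (a <? n)%nat eqn:E; destruct (a <? S n)%nat eqn:E2; auto;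
    apply Nat.ltb_lt in E || apply Nat.ltb_ge in E; apply Nat.ltb_lt in E2 || apply Nat.ltb_ge in E2; lia.
Qed.
Lemma nsum_ext {A} (f g : A -> nat) l : (forall x, In x l -> f x = g x) -> nsum f l = nsum g l.
Proof. intros H; unfold nsum; f_equal; apply map_ext_in; auto. Qed.
Lemma nsum_zero {A} (l : list A) : nsum (fun _ => 0%nat) l = 0%nat.
Proof. induction l; unfold nsum in *; simpl; auto. Qed.

Definition cntv (n : nat) (js : list nat) : list nat := map (fun j => count_occ Nat.eq_dec js j) (seq 0 n).

Lemma sum_cntv n js : (forall x, In x js -> (x < n)%nat) -> list_sum (cntv n js) = length js.
Proof.
  induction js as [|a js IH]; intros H; unfold cntv in *; simpl.
  - change (nsum (fun _ => 0%nat) (seq 0 n) = 0%nat). apply nsum_zero.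
  - change (nsum (fun j => if Nat.eq_dec a j then S (count_occ Nat.eq_dec js j) else count_occ Nat.eq_dec js j) (seq 0 n) = S (length js)).
    rewrite (nsum_ext _ (fun j => count_occ Nat.eq_dec js j + (if Nat.eq_dec a j then 1 else 0))%nat).
    rewrite nsum_add, nsum_ind.
    replace (nsum (count_occ Nat.eq_dec js) (seq 0 n)) with (length js)
      by (symmetry; apply IH; intros; apply H; right; auto).
    assert (a < n)%nat by (apply H; left; auto). apply Nat.ltb_lt in H0. rewrite H0. lia.
    intros x _. destruct (Nat.eq_dec a x); lia.
Qed.

Lemma length_cntv n js : length (cntv n js) = n.
Proof. unfold cntv; rewrite length_map, length_seq; auto. Qed.

Lemma cntv_multi n m js : In js (tuples n m) -> In (cntv n js) (multi n m).
Proof. intros H; apply tuples_In in H; destruct H as [H1 H2]. apply multi_In. split. apply length_cntv.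
  rewrite sum_cntv; auto. Qed.

Lemma nth_cntv n js j : (j < n)%nat -> nth j (cntv n js) 0%nat = count_occ Nat.eq_dec js j.
Proof. intros H. unfold cntv. rewrite (nth_indep _ _ ((fun j => count_occ Nat.eq_dec js j) 0%nat)) by (rewrite length_map, length_seq; auto).
  rewrite map_nth, seq_nth; auto. Qed.

Lemma cntv_perm n l l' : Permutation l l' -> cntv n l = cntv n l'.
Proof. intros H. unfold cntv. apply map_ext. intros; apply (Permutation_count_occ Nat.eq_dec); auto. Qed.

Fixpoint rep_from (i : nat) (alpha : list nat) : list nat :=
  match alpha with [] => [] | k :: r => repeat i k ++ rep_from (S i) r end.
Definition rep alpha := rep_from 0 alpha.

Lemma rep_from_length i alpha : length (rep_from i alpha) = list_sum alpha.
Proof. revert i; induction alpha; intros i; simpl; auto. rewrite length_app, repeat_length, IHalpha; auto. Qed.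
Lemma rep_from_In i alpha x : In x (rep_from i alpha) -> (i <= x < i + length alpha)%nat.
Proof. revert i; induction alpha; intros i; simpl. intros []. intros H. apply in_app_or in H; destruct H.
  apply repeat_spec in H; lia. apply IHalpha in H; lia. Qed.
Lemma rep_from_count i alpha j : count_occ Nat.eq_dec (rep_from i alpha) j =
  if (i <=? j)%nat then nth (j - i) alpha 0%nat else 0%nat.
Proof.
  revert i; induction alpha as [|k r IH]; intros i; simpl.
  - destruct (i <=? j)%nat; auto. destruct (j - i)%nat; auto.
  - rewrite count_occ_app, IH. destruct (Nat.eq_dec j i).
    + subst. rewrite count_occ_repeat_eq by auto. rewrite Nat.leb_refl, Nat.sub_diag.
      assert (S i <=? i = false)%nat by (apply Nat.leb_gt; lia). rewrite H; lia.
    + rewrite count_occ_repeat_neq by auto. destruct (i <=? j)%nat eqn:E.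
      * apply Nat.leb_le in E. assert (S i <=? j = true)%nat by (apply Nat.leb_le; lia). rewrite H.
        replace (j - i)%nat with (S (j - S i)) by lia. auto.
      * apply Nat.leb_gt in E. assert (S i <=? j = false)%nat by (apply Nat.leb_gt; lia). rewrite H; auto.
Qed.

Lemma cntv_rep n alpha : length alpha = n -> cntv n (rep alpha) = alpha.
Proof.
  intros Hl. apply nth_ext with 0%nat 0%nat. rewrite length_cntv; auto.
  intros j Hj. rewrite length_cntv in Hj. rewrite nth_cntv by auto. unfold rep; rewrite rep_from_count.
  simpl. rewrite Nat.sub_0_r; auto.
Qed.

Lemma rep_tuples n m alpha : In alpha (multi n m) -> In (rep alpha) (tuples n m).
Proof. intros H; apply multi_In in H; destruct H. apply tuples_In. split. unfold rep; rewrite rep_from_length; auto.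
  intros x Hx; apply rep_from_In in Hx; lia. Qed.

Lemma cntv_Perm n m js alpha : In js (tuples n m) -> In alpha (multi n m) -> cntv n js = alpha ->
  Permutation js (rep alpha).
Proof.
  intros Hjs Ha E. apply (Permutation_count_occ Nat.eq_dec). intros j.
  apply tuples_In in Hjs. apply multi_In in Ha. destruct Hjs as [_ Hjs], Ha as [Ha _].
  destruct (Nat.lt_ge_cases j n).
  - rewrite <- nth_cntv with (n := n) by auto. rewrite E. unfold rep; rewrite rep_from_count. simpl. rewrite Nat.sub_0_r; auto.
  - assert (E1 : count_occ Nat.eq_dec js j = 0%nat) by (apply count_occ_not_In; intros Hx; apply Hjs in Hx; lia).
    assert (E2 : count_occ Nat.eq_dec (rep alpha) j = 0%nat) by (apply count_occ_not_In; intros Hx; apply rep_from_In in Hx; lia).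
    congruence.
Qed.

Definition perms (m : nat) := filter (fun s => dec (NoDup s)) (tuples m m).
Lemma perms_In m s : In s (perms m) <-> In s (tuples m m) /\ NoDup s.
Proof. unfold perms; rewrite filter_In, dec_true; tauto. Qed.
Lemma perms_Perm m s : In s (perms m) -> Permutation s (seq 0 m).
Proof. intros H; apply perms_In in H; destruct H as [H1 H2]. apply tuples_In in H1; destruct H1 as [H1 H3].
  apply NoDup_Permutation_bis; auto. rewrite length_seq; lia. intros x Hx; apply in_seq; apply H3 in Hx; lia. Qed.
Lemma perms_all m s i : In s (perms m) -> (i < m)%nat -> In i s.
Proof. intros H Hi. apply perms_Perm in H. apply Permutation_in with (seq 0 m). apply Permutation_sym; auto.
  apply in_seq; lia. Qed.

Lemma filter_flat {A B} (f : B -> bool) (g : A -> list B) l :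
  filter f (flat_map g l) = flat_map (fun x => filter f (g x)) l.
Proof. induction l; simpl; auto. rewrite filter_app, IHl; auto. Qed.
Lemma filter_map_cons {A} (f : list A -> bool) (j : A) L :
  filter f (map (cons j) L) = map (cons j) (filter (fun s => f (j :: s)) L).
Proof. induction L; simpl; auto. destruct (f (j :: a)); simpl; rewrite IHL; auto. Qed.
Lemma length_flat {A B} (g : A -> list B) l : length (flat_map g l) = nsum (fun x => length (g x)) l.
Proof. induction l; unfold nsum in *; simpl; auto. rewrite length_app, IHl; auto. Qed.

Lemma remove_length_count (s : list nat) j :
  (length (remove Nat.eq_dec j s) + count_occ Nat.eq_dec s j)%nat = length s.
Proof. induction s as [|a s IH]; simpl; auto. destruct (Nat.eq_dec j a), (Nat.eq_dec a j); subst; simpl; try lia; congruence. Qed.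
Lemma remove_NoDup (s : list nat) j : NoDup s -> NoDup (remove Nat.eq_dec j s).
Proof. induction 1; simpl. constructor. destruct (Nat.eq_dec j x). auto. constructor; auto.
  intros Hx; apply in_remove in Hx; tauto. Qed.

Lemma nsum_if {A} (P : A -> Prop) c l :
  nsum (fun j => if dec (P j) then c else 0%nat) l = (length (filter (fun j => dec (P j)) l) * c)%nat.
Proof. induction l; unfold nsum in *; simpl; auto. destruct (dec (P a)); simpl; rewrite IHl; lia. Qed.

Lemma filter_false_nil {A} (f : A -> bool) l : (forall x, In x l -> f x = false) -> filter f l = [].
Proof. induction l; simpl; auto. intros H. rewrite H by (left; auto). apply IHl; intros; apply H; right; auto. Qed.

Lemma count_gen n : forall k s, NoDup s -> length s = k -> (forall x, In x s -> (x < n)%nat) ->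
  length (filter (fun sg => dec (NoDup sg /\ incl sg s)) (tuples n k)) = fact k.
Proof.
  induction k as [|k IH]; intros s Hs Hl Hn.
  - destruct s; [|discriminate]. simpl. assert (dec (NoDup (@nil nat) /\ incl (@nil nat) (@nil nat)) = true) as E.
    apply dec_true. split. constructor. intros x []. rewrite E; auto.
  - cbn [tuples]. rewrite filter_flat, length_flat.
    rewrite (nsum_ext _ (fun j => if dec (In j s) then fact k else 0%nat)).
    + rewrite nsum_if.
      assert (Permutation (filter (fun j => dec (In j s)) (seq 0 n)) s).
      { apply NoDup_Permutation; auto. apply NoDup_filter, seq_NoDup.
        intros x. rewrite filter_In, dec_true, in_seq. split. tauto. intros Hx; split; auto. apply Hn in Hx; lia. }
      apply Permutation_length in H. rewrite H, Hl. simpl. lia.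
    + intros j Hj. rewrite filter_map_cons, length_map. destruct (dec (In j s)) eqn:E.
      * apply (proj1 (dec_true _)) in E.
        rewrite (filter_ext (fun sg => dec (NoDup (j :: sg) /\ incl (j :: sg) s))
                            (fun sg => dec (NoDup sg /\ incl sg (remove Nat.eq_dec j s)))).
        apply IH. apply remove_NoDup; auto.
        pose proof (remove_length_count s j). rewrite (proj1 (NoDup_count_occ' Nat.eq_dec s) Hs j E) in H. lia.
        intros x Hx; apply in_remove in Hx; apply Hn; tauto.
        intros sg. apply dec_ext. split.
        -- intros [H1 H2]. inversion H1; subst. split; auto. intros x Hx. apply in_in_remove.
           intros ->; auto. apply H2; right; auto.
        -- intros [H1 H2]. split. constructor; auto. intros Hj'. apply H2 in Hj'. apply in_remove in Hj'. tauto.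
           intros x [<-|Hx]; auto. apply H2 in Hx; apply in_remove in Hx; tauto.
      * rewrite filter_false_nil; auto. intros sg _. destruct (dec (NoDup (j :: sg) /\ incl (j :: sg) s)) eqn:E2; auto.
        apply (proj1 (dec_true _)) in E2. destruct E2 as [_ E2]. assert (In j s) by (apply E2; left; auto).
        assert (dec (In j s) = true) by (apply dec_true; auto). congruence.
Qed.

Lemma perms_length m : length (perms m) = fact m.
Proof.
  unfold perms. rewrite <- (count_gen m m (seq 0 m)). f_equal. apply filter_ext_in.
  intros sg Hsg. apply dec_ext. apply tuples_In in Hsg. split; [|tauto]. intros; split; auto.
  intros x Hx; apply in_seq; apply Hsg in Hx; lia.
  apply seq_NoDup. apply length_seq. intros x Hx; apply in_seq in Hx; lia.
Qed.

Definition Ncnt n m alpha := length (filter (fun js => dec (cntv n js = alpha)) (tuples n m)).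

Lemma nth_map_seq {B} (f : nat -> B) i m d : (i < m)%nat -> nth i (map f (seq 0 m)) d = f i.
Proof. intros H. rewrite (nth_indep _ _ (f 0%nat)) by (rewrite length_map, length_seq; auto).
  rewrite map_nth, seq_nth; auto. Qed.
Lemma map_nth_seq_self (l : list nat) : map (fun i => nth i l 0%nat) (seq 0 (length l)) = l.
Proof. apply nth_ext with 0%nat 0%nat. rewrite length_map, length_seq; auto.
  intros i Hi. rewrite length_map, length_seq in Hi.
  rewrite nth_map_seq; auto. Qed.

Lemma Ncnt_le n m alpha : In alpha (multi n m) -> (Ncnt n m alpha <= fact m)%nat.
Proof.
  intros Ha. unfold Ncnt. set (r := rep alpha).
  assert (Hr : length r = m) by (unfold r, rep; rewrite rep_from_length; apply multi_In in Ha; tauto).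
  rewrite <- perms_length. rewrite <- (length_map (fun sg => map (fun i => nth i r 0%nat) sg) (perms m)).
  apply NoDup_incl_length. apply NoDup_filter, tuples_NoDup.
  intros js Hjs. apply filter_In in Hjs. destruct Hjs as [Hjs E]. apply (proj1 (dec_true _)) in E.
  pose proof (cntv_Perm n m js alpha Hjs Ha E) as HP. fold r in HP.
  rewrite <- (map_nth_seq_self r) in HP. rewrite Hr in HP.
  destruct (Permutation_map_inv _ _ HP) as [l3 [-> Hl3]].
  apply in_map. apply perms_In. split.
  apply tuples_In. split. apply Permutation_length in Hl3; rewrite length_seq in Hl3; auto.
  intros x Hx. apply (Permutation_in _ (Permutation_sym Hl3)) in Hx. apply in_seq in Hx; lia.
  apply Permutation_NoDup with (seq 0 m); auto. apply seq_NoDup.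
Qed.

Lemma Ncnt_ge1 n m alpha : In alpha (multi n m) -> (1 <= Ncnt n m alpha)%nat.
Proof.
  intros Ha. unfold Ncnt. assert (In (rep alpha) (filter (fun js => dec (cntv n js = alpha)) (tuples n m))).
  apply filter_In. split. apply rep_tuples; auto. apply dec_true. apply cntv_rep. apply multi_In in Ha; tauto.
  destruct (filter _ _); [destruct H|simpl; lia].
Qed.

Definition prodl (f : nat -> Cx) (l : list nat) : Cx := fold_right (fun j acc => Cmul (f j) acc) C1 l.

Lemma prodl_app f l1 l2 : prodl f (l1 ++ l2) = Cmul (prodl f l1) (prodl f l2).
Proof. induction l1; unfold prodl in *; simpl. ring. rewrite IHl1; ring. Qed.
Lemma prodl_perm f l l' : Permutation l l' -> prodl f l = prodl f l'.
Proof. induction 1; unfold prodl in *; simpl; auto. rewrite IHPermutation; auto. ring. congruence. Qed.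
Lemma prodl_repeat f i k : prodl f (repeat i k) = Cpow (f i) k.
Proof. induction k; unfold prodl in *; simpl; auto. rewrite IHk; auto. Qed.
Lemma prodl_ext_in f g l : (forall x, In x l -> f x = g x) -> prodl f l = prodl g l.
Proof. induction l; intros H; unfold prodl in *; simpl; auto. rewrite H by (left; auto). rewrite IHl; auto.
  intros; apply H; right; auto. Qed.
Lemma prodl_mul f g l : prodl (fun x => Cmul (f x) (g x)) l = Cmul (prodl f l) (prodl g l).
Proof. induction l; unfold prodl in *; simpl. ring. rewrite IHl; ring. Qed.
Lemma Cpow_mul c d k : Cpow (Cmul c d) k = Cmul (Cpow c k) (Cpow d k).
Proof. induction k; simpl. ring. rewrite IHk; ring. Qed.
Lemma Cpow_add c k l : Cpow c (k + l) = Cmul (Cpow c k) (Cpow c l).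
Proof. induction k; simpl. ring. rewrite IHk; ring. Qed.
Lemma prodl_scal c y l : prodl (fun j => Cmul c (y j)) l = Cmul (Cpow c (length l)) (prodl y l).
Proof. induction l; unfold prodl in *; simpl. ring. rewrite IHl; ring. Qed.
Lemma prodl_map f g l : prodl f (map g l) = prodl (fun x => f (g x)) l.
Proof. induction l; unfold prodl in *; simpl; auto. rewrite IHl; auto. Qed.
Lemma prodl_const c l : prodl (fun _ => c) l = Cpow c (length l).
Proof. induction l; unfold prodl in *; simpl; auto. rewrite IHl; auto. Qed.

Lemma monom_from_prodl i alpha x : monom_from i alpha x = prodl x (rep_from i alpha).
Proof. revert i; induction alpha; intros i; simpl; auto. rewrite prodl_app, prodl_repeat, IHalpha; auto. Qed.

Lemma prodl_nth y js : prodl y js = prodl (fun t => y (nth t js 0%nat)) (seq 0 (length js)).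
Proof.
  induction js as [|j js IH]; simpl; auto. unfold prodl at 1; simpl; fold (prodl y js).
  rewrite IH. rewrite <- seq_shift, prodl_map. unfold prodl at 2; simpl. auto.
Qed.

Fixpoint PrF (F : nat -> nat -> Cx) (tau : list nat) : Cx :=
  match tau with [] => C1 | j :: t => Cmul (F 0%nat j) (PrF (fun s => F (S s)) t) end.

Lemma PrF_nth F tau : PrF F tau = prodl (fun t => F t (nth t tau 0%nat)) (seq 0 (length tau)).
Proof.
  revert F; induction tau as [|j tau IH]; intros F; simpl; auto.
  rewrite IH. rewrite <- seq_shift, prodl_map. unfold prodl at 2; simpl. auto.
Qed.

Lemma Csum_mul_r {A} c (f : A -> Cx) l : Cmul (Csum f l) c = Csum (fun x => Cmul (f x) c) l.
Proof. induction l; unfold Csum in *; simpl. apply Cx_eq; unfold Cmul, C0; simpl; ring.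
  rewrite <- IHl. ring. Qed.

Lemma distr n L : forall F, Csum (PrF F) (tuples n L) = prodl (fun t => Csum (F t) (seq 0 n)) (seq 0 L).
Proof.
  induction L; intros F. simpl. unfold Csum, prodl; simpl. ring.
  cbn [tuples]. rewrite Csum_flat_map.
  replace (seq 0 (S L)) with (0%nat :: map S (seq 0 L)) by (simpl; rewrite seq_shift; auto).
  unfold prodl at 1; cbn [fold_right].
  fold (prodl (fun t => Csum (F t) (seq 0 n)) (map S (seq 0 L))). rewrite prodl_map. rewrite <- IHL.
  rewrite Csum_mul_r. apply Csum_ext_in. intros j _. rewrite Csum_map. simpl. rewrite Csum_mul_l; auto.
Qed.

Lemma csum_indicator {B} (L : list B) b0 (g : B -> Cx) : NoDup L -> In b0 L ->
  Csum (fun b => Cmul (Cr (if dec (b0 = b) then 1 else 0)) (g b)) L = g b0.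
Proof.
  induction 1 as [|a l0 Ha HL IH]; intros Hb. destruct Hb. rewrite Csum_cons.
  destruct (dec (b0 = a)) eqn:E.
  - apply (proj1 (dec_true _)) in E; subst b0.
    rewrite (Csum_ext_in _ (fun _ => C0)). rewrite Csum_zero. rewrite Cr1; ring.
    intros x Hx. destruct (dec (a = x)) eqn:E2. apply (proj1 (dec_true _)) in E2; subst; tauto. rewrite Cr0; ring.
  - destruct Hb as [Hab|Hb]. subst b0. assert (dec (a = a) = true) by (apply dec_true; auto). congruence.
    rewrite IH by auto. rewrite Cr0; ring.
Qed.

Lemma Csum_group {A B} (h : A -> B) (g : B -> Cx) (l : list A) (L : list B) :
  NoDup L -> (forall x, In x l -> In (h x) L) ->
  Csum (fun x => g (h x)) l =
  Csum (fun b => Cmul (Cr (INR (length (filter (fun x => dec (h x = b)) l)))) (g b)) L.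
Proof.
  intros HL. induction l as [|x l IH]; intros Hh.
  - simpl. rewrite (Csum_ext_in _ (fun _ => C0)). rewrite Csum_zero; auto. intros; simpl; rewrite Cr0; ring.
  - rewrite Csum_cons, IH by (intros; apply Hh; right; auto).
    rewrite <- (csum_indicator L (h x) g HL) by (apply Hh; left; auto).
    rewrite <- Csum_add. apply Csum_ext_in. intros b _. simpl.
    destruct (dec (h x = b)); simpl length; try rewrite S_INR; rewrite ?Cr_add, ?Cr0, ?Cr1; ring.
Qed.

Lemma Csum_filter {A} (f : A -> Cx) (p : A -> bool) l :
  Csum f (filter p l) = Csum (fun x => if p x then f x else C0) l.
Proof. induction l; simpl; auto. destruct (p a); rewrite ?Csum_cons, IHl; auto. ring. Qed.

Lemma Re_Csum_Cr {A} (f : A -> R) l : Rsum f l = Re (Csum (fun x => Cr (f x)) l).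
Proof. rewrite Csum_Cr; reflexivity. Qed.

Lemma Rsum_group {A B} (h : A -> B) (g : B -> R) (l : list A) (L : list B) :
  NoDup L -> (forall x, In x l -> In (h x) L) ->
  Rsum (fun x => g (h x)) l =
  Rsum (fun b => INR (length (filter (fun x => dec (h x = b)) l)) * g b) L.
Proof.
  intros. rewrite !Re_Csum_Cr. f_equal. rewrite (Csum_group h (fun b => Cr (g b)) l L) by auto.
  apply Csum_ext_in; intros; rewrite Cr_mul; auto.
Qed.

Definition cc n m (a : list nat -> Cx) js :=
  Cmul (Cr (/ INR (Ncnt n m (cntv n js)))) (a (cntv n js)).

Lemma prodl_cntv n m y js : In js (tuples n m) -> prodl y js = monom (cntv n js) y.
Proof. intros H. unfold monom. rewrite monom_from_prodl. apply prodl_perm.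
  apply (cntv_Perm n m); auto. apply cntv_multi; auto. Qed.

Lemma poly_repr n m a y : poly_eval n m a y = Csum (fun js => Cmul (cc n m a js) (prodl y js)) (tuples n m).
Proof.
  pose (g := fun alpha => Cmul (Cr (/ INR (Ncnt n m alpha))) (Cmul (a alpha) (monom alpha y))).
  rewrite (Csum_ext_in _ (fun js => g (cntv n js))).
  2:{ intros js Hjs. unfold cc, g. rewrite (prodl_cntv n m) by auto. ring. }
  rewrite (Csum_group (cntv n) g (tuples n m) (multi n m)). 2: apply multi_NoDup. 2: apply cntv_multi.
  unfold poly_eval. apply Csum_ext_in. intros alpha Ha. fold (Ncnt n m alpha). unfold g.
  pose proof (Ncnt_ge1 n m alpha Ha). apply le_INR in H. simpl in H.
  symmetry. transitivity (Cmul (Cmul (Cr (INR (Ncnt n m alpha))) (Cr (/ INR (Ncnt n m alpha)))) (Cmul (a alpha) (monom alpha y))). ring.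
  rewrite <- Cr_mul. rewrite Rinv_r by lra. rewrite Cr1; ring.
Qed.

Definition zv : vec := fun _ => C0.
Definition sgn (e : nat) : Cx := if Nat.eqb e 0 then C1 else Cr (-1).
Definition ycomb m (eps : list nat) (X : list vec) : vec :=
  fun j => Csum (fun i => Cmul (sgn (nth i eps 0%nat)) (nth i X zv j)) (seq 0 m).
Definition sprod m eps := prodl (fun i => sgn (nth i eps 0%nat)) (seq 0 m).
Definition Bt m (X : list vec) js sg := prodl (fun t => nth (nth t sg 0%nat) X zv (nth t js 0%nat)) (seq 0 m).

Lemma prodl_group m f sg : (forall x, In x sg -> (x < m)%nat) ->
  prodl f sg = prodl (fun i => Cpow (f i) (count_occ Nat.eq_dec sg i)) (seq 0 m).
Proof.
  induction sg as [|j sg IH]; intros H.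
  - unfold prodl; simpl. induction (seq 0 m); simpl; auto. rewrite <- IHl; ring.
  - unfold prodl at 1; simpl; fold (prodl f sg). rewrite IH by (intros; apply H; right; auto).
    assert (Hj : (j < m)%nat) by (apply H; left; auto).
    assert (Hin : In j (seq 0 m)) by (apply in_seq; lia). apply in_split in Hin. destruct Hin as [l1 [l2 E]].
    assert (Hnd : NoDup (seq 0 m)) by apply seq_NoDup. rewrite E in Hnd |- *.
    apply NoDup_remove_2 in Hnd.
    rewrite !prodl_app. unfold prodl at 2 4; simpl. fold (prodl (fun i => Cpow (f i) (count_occ Nat.eq_dec sg i)) l2).
    fold (prodl (fun i => Cpow (f i) (if Nat.eq_dec j i then S (count_occ Nat.eq_dec sg i) else count_occ Nat.eq_dec sg i)) l2).
    destruct (Nat.eq_dec j j); [|congruence].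
    rewrite (prodl_ext_in (fun i => Cpow (f i) (if Nat.eq_dec j i then S (count_occ Nat.eq_dec sg i) else count_occ Nat.eq_dec sg i)) (fun i => Cpow (f i) (count_occ Nat.eq_dec sg i)) l1).
    rewrite (prodl_ext_in (fun i => Cpow (f i) (if Nat.eq_dec j i then S (count_occ Nat.eq_dec sg i) else count_occ Nat.eq_dec sg i)) (fun i => Cpow (f i) (count_occ Nat.eq_dec sg i)) l2).
    simpl. ring.
    intros x Hx. destruct (Nat.eq_dec j x); auto. subst. exfalso; apply Hnd; apply in_or_app; auto.
    intros x Hx. destruct (Nat.eq_dec j x); auto. subst. exfalso; apply Hnd; apply in_or_app; auto.
Qed.

Lemma Cpow_Cr r k : Cpow (Cr r) k = Cr (r ^ k).
Proof. induction k; simpl; auto. rewrite IHk, Cr_mul; auto. Qed.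

Lemma prodl_zero f l x : In x l -> f x = C0 -> prodl f l = C0.
Proof. induction l; simpl. intros []. intros [->|H] Hf; unfold prodl in *; simpl. rewrite Hf; ring.
  rewrite IHl; auto; ring. Qed.

Lemma nsum_ge {A} (f : A -> nat) l : (forall x, In x l -> (1 <= f x)%nat) -> (length l <= nsum f l)%nat.
Proof. induction l; unfold nsum in *; simpl; intros H. lia.
  assert (1 <= f a)%nat by (apply H; left; auto). assert (length l <= list_sum (map f l))%nat by (apply IHl; intros; apply H; right; auto). lia. Qed.
Lemma nsum_all_one {A} (f : A -> nat) l : nsum f l = length l -> (forall x, In x l -> (1 <= f x)%nat) ->
  forall x, In x l -> f x = 1%nat.
Proof.
  induction l; intros Hs Hge x Hx. destruct Hx.
  assert (1 <= f a)%nat by (apply Hge; left; auto).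
  assert (length l <= nsum f l)%nat by (apply nsum_ge; intros; apply Hge; right; auto).
  unfold nsum in *; simpl in Hs. destruct Hx as [<-|Hx]. lia.
  apply IHl; auto. lia. intros; apply Hge; right; auto.
Qed.

Lemma sgn_factor c : Csum (fun e => Cpow (sgn e) (S c)) (seq 0 2) = Cr (1 + (-1) ^ (S c)).
Proof.
  unfold Csum; simpl. unfold sgn; simpl. rewrite <- Cr1, !Cpow_Cr, pow1.
  apply Cx_eq; unfold Cr, Cadd, Cmul, C0; simpl; ring.
Qed.

Lemma W_value m sg : In sg (tuples m m) ->
  Csum (fun eps => Cmul (sprod m eps) (prodl (fun t => sgn (nth (nth t sg 0%nat) eps 0%nat)) (seq 0 m))) (tuples 2 m)
  = if dec (NoDup sg) then Cr (2 ^ m) else C0.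
Proof.
  intros Hsg. pose proof Hsg as Hsg'. apply tuples_In in Hsg'. destruct Hsg' as [Hl Hx].
  rewrite (Csum_ext_in _ (PrF (fun i e => Cpow (sgn e) (S (count_occ Nat.eq_dec sg i))))).
  2:{ intros eps Heps. apply tuples_In in Heps. destruct Heps as [Hle _].
      rewrite PrF_nth, Hle. unfold sprod.
      rewrite <- Hl. rewrite <- (prodl_nth (fun j => sgn (nth j eps 0%nat)) sg). rewrite Hl.
      rewrite (prodl_group m _ sg) by auto. rewrite <- prodl_mul. apply prodl_ext_in; intros; simpl; auto. }
  rewrite distr. rewrite (prodl_ext_in _ (fun i => Cr (1 + (-1) ^ (S (count_occ Nat.eq_dec sg i))))).
  2:{ intros; apply sgn_factor. }
  destruct (dec (NoDup sg)) eqn:E.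
  - apply (proj1 (dec_true _)) in E.
    assert (Hp : In sg (perms m)) by (apply perms_In; auto).
    rewrite (prodl_ext_in _ (fun _ => Cr 2)). rewrite prodl_const, Cpow_Cr, length_seq; auto.
    intros i Hi. apply in_seq in Hi. rewrite (proj1 (NoDup_count_occ' Nat.eq_dec sg) E i) by (apply (perms_all m); auto; lia).
    f_equal. simpl. ring.
  - assert (exists i, In i (seq 0 m) /\ Nat.Even (count_occ Nat.eq_dec sg i)).
    { apply NNPP. intros Hn. assert (dec (NoDup sg) = true); [|congruence]. apply dec_true.
      assert (Hodd : forall i, In i (seq 0 m) -> Nat.Odd (count_occ Nat.eq_dec sg i)).
      { intros i Hi. destruct (Nat.Even_or_Odd (count_occ Nat.eq_dec sg i)); auto. exfalso; apply Hn; eauto. }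
      assert (Hone : forall i, In i (seq 0 m) -> count_occ Nat.eq_dec sg i = 1%nat).
      { apply nsum_all_one. rewrite length_seq. transitivity (length sg). exact (sum_cntv m sg Hx). auto.
        intros i Hi. destruct (Hodd i Hi) as [k Hk]. lia. }
      apply (NoDup_count_occ Nat.eq_dec). intros i. destruct (Nat.lt_ge_cases i m).
      rewrite Hone; auto; apply in_seq; lia.
      assert (count_occ Nat.eq_dec sg i = 0%nat) by (apply count_occ_not_In; intros Hi; apply Hx in Hi; lia). lia. }
    destruct H as [i [Hi [k Hk]]]. apply (prodl_zero _ _ i); auto. rewrite Hk.
    replace (S (2 * k)) with (S (2*k))%nat by auto. rewrite pow_1_odd. rewrite <- Cr0; f_equal; ring.
Qed.

Lemma polar m X js : length js = m ->
  Csum (fun eps => Cmul (sprod m eps) (prodl (ycomb m eps X) js)) (tuples 2 m)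
  = Cmul (Cr (2 ^ m)) (Csum (fun sg => Bt m X js sg) (perms m)).
Proof.
  intros Hl.
  rewrite (Csum_ext_in _ (fun eps => Csum (fun sg => Cmul (Bt m X js sg)
       (Cmul (sprod m eps) (prodl (fun t => sgn (nth (nth t sg 0%nat) eps 0%nat)) (seq 0 m)))) (tuples m m))).
  2:{ intros eps Heps. rewrite prodl_nth, Hl. unfold ycomb.
      rewrite <- (distr m m (fun t i => Cmul (sgn (nth i eps 0%nat)) (nth i X zv (nth t js 0%nat)))).
      rewrite Csum_mul_l. apply Csum_ext_in. intros sg Hsg. apply tuples_In in Hsg. destruct Hsg as [Hsl _].
      rewrite PrF_nth, Hsl, prodl_mul. unfold Bt. ring. }
  rewrite Csum_swap.
  rewrite (Csum_ext_in _ (fun sg => if dec (NoDup sg) then Cmul (Cr (2 ^ m)) (Bt m X js sg) else C0)).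
  2:{ intros sg Hsg. rewrite <- Csum_mul_l. rewrite W_value by auto. destruct (dec (NoDup sg)); ring. }
  unfold perms. rewrite Csum_filter. rewrite Csum_mul_l. apply Csum_ext_in; intros; destruct (dec (NoDup x)); auto. ring.
Qed.

Definition Tf n m a (X : list vec) : Cx :=
  Cmul (Cr (/ INR (fact m))) (Csum (fun js => Cmul (cc n m a js) (Csum (fun sg => Bt m X js sg) (perms m))) (tuples n m)).

Lemma polar_full n m a X :
  Csum (fun eps => Cmul (sprod m eps) (poly_eval n m a (ycomb m eps X))) (tuples 2 m)
  = Cmul (Cr (2 ^ m * INR (fact m))) (Tf n m a X).
Proof.
  rewrite (Csum_ext_in _ (fun eps => Csum (fun js => Cmul (cc n m a js) (Cmul (sprod m eps) (prodl (ycomb m eps X) js))) (tuples n m))).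
  2:{ intros eps _. rewrite poly_repr, Csum_mul_l. apply Csum_ext_in; intros; ring. }
  rewrite Csum_swap. unfold Tf.
  rewrite (Csum_ext_in _ (fun js => Cmul (cc n m a js) (Cmul (Cr (2 ^ m)) (Csum (fun sg => Bt m X js sg) (perms m))))).
  2:{ intros js Hjs. rewrite <- Csum_mul_l. rewrite polar; auto. apply tuples_In in Hjs; tauto. }
  rewrite Cr_mul. 
  assert (Hf : INR (fact m) <> 0) by (apply not_0_INR; apply fact_neq_0).
  transitivity (Cmul (Cr (2 ^ m)) (Cmul (Cmul (Cr (INR (fact m))) (Cr (/ INR (fact m)))) (Csum (fun js => Cmul (cc n m a js) (Csum (fun sg => Bt m X js sg) (perms m))) (tuples n m)))).
  rewrite <- Cr_mul, Rinv_r by auto. rewrite Cr1. rewrite Csum_mul_l, Csum_mul_l. apply Csum_ext_in; intros; ring.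
  ring.
Qed.

Lemma Cpow_C1 k : Cpow C1 k = C1.
Proof. induction k; simpl; auto. rewrite IHk; ring. Qed.

Lemma nth_map' {B} (f : nat -> B) l t d : (t < length l)%nat -> nth t (map f l) d = f (nth t l 0%nat).
Proof. intros H. rewrite (nth_indep _ _ (f 0%nat)) by (rewrite length_map; auto). apply map_nth. Qed.

Lemma prodl_delta (l1 l2 : list nat) m : length l1 = m -> length l2 = m ->
  prodl (fun t => if Nat.eqb (nth t l1 0%nat) (nth t l2 0%nat) then C1 else C0) (seq 0 m) = if dec (l1 = l2) then C1 else C0.
Proof.
  intros H1 H2. destruct (dec (l1 = l2)) eqn:E.
  - apply (proj1 (dec_true _)) in E. subst. rewrite (prodl_ext_in _ (fun _ => C1)). rewrite prodl_const, Cpow_C1; auto.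
    intros; rewrite Nat.eqb_refl; auto.
  - assert (exists t, (t < m)%nat /\ nth t l1 0%nat <> nth t l2 0%nat).
    { apply NNPP; intros Hn. assert (dec (l1 = l2) = true); [|congruence]. apply dec_true.
      apply nth_ext with 0%nat 0%nat. congruence. intros t Ht. apply NNPP; intros Hne. apply Hn. exists t; split; auto; lia. }
    destruct H as [t [Ht Hne]]. apply (prodl_zero _ _ t). apply in_seq; lia.
    destruct (Nat.eqb_spec (nth t l1 0%nat) (nth t l2 0%nat)); auto; congruence.
Qed.

Lemma Csum_const {A} c (l : list A) : Csum (fun _ => c) l = Cmul (Cr (INR (length l))) c.
Proof. induction l; simpl length. unfold Csum; simpl; apply Cx_eq; unfold Cr, Cmul, C0; simpl; ring.
  rewrite Csum_cons, IHl, S_INR, Cr_add, Cr1; ring. Qed.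

Lemma perm_map_J m (J sg : list nat) : length J = m -> In sg (perms m) ->
  Permutation (map (fun i => nth i J 0%nat) sg) J.
Proof.
  intros HJ Hs. apply perms_Perm in Hs.
  transitivity (map (fun i => nth i J 0%nat) (seq 0 m)). apply Permutation_map; auto.
  rewrite <- HJ, map_nth_seq_self; auto.
Qed.

Lemma Tf_unit n m a J : In J (tuples n m) -> Tf n m a (map unitv J) = cc n m a J.
Proof.
  intros HJ. pose proof HJ as HJ'. apply tuples_In in HJ'. destruct HJ' as [HJl HJx].
  unfold Tf.
  rewrite (Csum_ext_in _ (fun js => Csum (fun sg => Cmul (Cr (if dec (map (fun i => nth i J 0%nat) sg = js) then 1 else 0)) (cc n m a js)) (perms m))).
  2:{ intros js Hjs. rewrite Csum_mul_l. apply Csum_ext_in. intros sg Hsg.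
      assert (Hsl : length sg = m) by (apply perms_In in Hsg; destruct Hsg as [Hsg _]; apply tuples_In in Hsg; tauto).
      unfold Bt. rewrite (prodl_ext_in _ (fun t => if Nat.eqb (nth t js 0%nat) (nth t (map (fun i => nth i J 0%nat) sg) 0%nat) then C1 else C0)).
      rewrite prodl_delta. destruct (dec (js = map (fun i => nth i J 0%nat) sg)) eqn:E1;
      destruct (dec (map (fun i => nth i J 0%nat) sg = js)) eqn:E2; rewrite ?Cr1, ?Cr0; try ring.
      apply (proj1 (dec_true _)) in E1. assert (dec (map (fun i => nth i J 0%nat) sg = js) = true) by (apply dec_true; auto). congruence.
      apply (proj1 (dec_true _)) in E2. assert (dec (js = map (fun i => nth i J 0%nat) sg) = true) by (apply dec_true; auto). congruence.
      apply tuples_In in Hjs; tauto. rewrite length_map; auto.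
      intros t Ht. apply in_seq in Ht.
      assert (Hst : (nth t sg 0%nat < m)%nat).
      { apply perms_In in Hsg. destruct Hsg as [Hsg _]. apply tuples_In in Hsg. apply Hsg. apply nth_In; lia. }
      rewrite !nth_map' by (rewrite ?Hsl, ?HJl; lia). unfold unitv. auto. }
  rewrite Csum_swap.
  rewrite (Csum_ext_in _ (fun sg => cc n m a J)).
  2:{ intros sg Hsg. rewrite csum_indicator. 2: apply tuples_NoDup.
      unfold cc. rewrite (cntv_perm n _ _ (perm_map_J m J sg HJl Hsg)); auto.
      apply tuples_In. split. rewrite length_map. apply perms_In in Hsg. destruct Hsg as [Hsg _]. apply tuples_In in Hsg; tauto.
      intros x Hx. apply in_map_iff in Hx. destruct Hx as [i [<- Hi]]. apply HJx.
      apply nth_In. apply perms_In in Hsg. destruct Hsg as [Hsg _]. apply tuples_In in Hsg. rewrite HJl. apply Hsg; auto. }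
  rewrite Csum_const, perms_length.
  assert (Hf : INR (fact m) <> 0) by (apply not_0_INR; apply fact_neq_0).
  transitivity (Cmul (Cmul (Cr (/ INR (fact m))) (Cr (INR (fact m)))) (cc n m a J)). ring.
  rewrite <- Cr_mul, Rinv_l, Cr1 by auto. ring.
Qed.

Lemma prodl_lin (fw fy fz : nat -> Cx) c l t0 : NoDup l -> In t0 l ->
  (forall t, In t l -> t <> t0 -> fw t = fy t /\ fz t = fy t) ->
  fw t0 = Cadd (Cmul c (fy t0)) (fz t0) ->
  prodl fw l = Cadd (Cmul c (prodl fy l)) (prodl fz l).
Proof.
  induction 1 as [|a l Ha Hl IH]; intros Ht0 Hoth Hw. destruct Ht0.
  unfold prodl; simpl; fold (prodl fw l) (prodl fy l) (prodl fz l).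
  destruct (Nat.eq_dec a t0).
  - subst a. assert (E1 : prodl fw l = prodl fy l) by (apply prodl_ext_in; intros t Ht; apply Hoth; [right; auto| intros ->; auto]).
    assert (E2 : prodl fz l = prodl fy l) by (apply prodl_ext_in; intros t Ht; apply Hoth; [right; auto| intros ->; auto]).
    rewrite E1, E2, Hw. ring.
  - destruct Ht0 as [->|Ht0]; [congruence|].
    rewrite IH; auto. destruct (Hoth a (or_introl eq_refl) n) as [E1 E2]. rewrite E1, E2. ring.
    intros; apply Hoth; auto; right; auto.
Qed.

Lemma nth_other (l1 l2 : list vec) v v' k d : k <> length l1 ->
  nth k (l1 ++ v :: l2) d = nth k (l1 ++ v' :: l2) d.
Proof.
  intros H. destruct (Nat.lt_ge_cases k (length l1)). rewrite !app_nth1; auto.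
  rewrite !app_nth2 by auto. destruct (k - length l1)%nat eqn:E; [lia|]. reflexivity.
Qed.

Lemma Bt_lin m l1 l2 y z c js sg : (length l1 + S (length l2))%nat = m -> In sg (perms m) ->
  Bt m (l1 ++ vadd (vscal c y) z :: l2) js sg =
  Cadd (Cmul c (Bt m (l1 ++ y :: l2) js sg)) (Bt m (l1 ++ z :: l2) js sg).
Proof.
  intros Hm Hsg.
  assert (Hsl : length sg = m) by (apply perms_In in Hsg; destruct Hsg as [Hsg _]; apply tuples_In in Hsg; tauto).
  assert (Hnd : NoDup sg) by (apply perms_In in Hsg; tauto).
  assert (Hi : In (length l1) sg) by (apply (perms_all m); auto; lia).
  destruct (In_nth sg (length l1) 0%nat Hi) as [t0 [Ht0 Et0]].
  unfold Bt. apply (prodl_lin _ _ _ c (seq 0 m) t0). apply seq_NoDup. apply in_seq; lia.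
  - intros t Ht Hne. apply in_seq in Ht. assert (nth t sg 0%nat <> length l1).
    { intros E. apply Hne. apply (proj1 (NoDup_nth sg 0%nat) Hnd); (try lia); congruence. }
    split; [rewrite (nth_other l1 l2 (vadd (vscal c y) z) y) | rewrite (nth_other l1 l2 z y)]; auto.
  - rewrite Et0, !nth_middle. reflexivity.
Qed.

Lemma Tf_lin n m a l1 l2 y z c : (length l1 + S (length l2))%nat = m ->
  Tf n m a (l1 ++ vadd (vscal c y) z :: l2) =
  Cadd (Cmul c (Tf n m a (l1 ++ y :: l2))) (Tf n m a (l1 ++ z :: l2)).
Proof.
  intros Hm. unfold Tf.
  rewrite (Csum_ext_in (fun js => Cmul (cc n m a js) (Csum (fun sg => Bt m (l1 ++ vadd (vscal c y) z :: l2) js sg) (perms m)))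
    (fun js => Cadd (Cmul c (Cmul (cc n m a js) (Csum (fun sg => Bt m (l1 ++ y :: l2) js sg) (perms m))))
                    (Cmul (cc n m a js) (Csum (fun sg => Bt m (l1 ++ z :: l2) js sg) (perms m))))).
  rewrite Csum_add, <- (Csum_mul_l c). ring.
  intros js _. rewrite (Csum_ext_in _ (fun sg => Cadd (Cmul c (Bt m (l1 ++ y :: l2) js sg)) (Bt m (l1 ++ z :: l2) js sg))).
  rewrite Csum_add, <- (Csum_mul_l c).
  replace (Csum (fun sg => Bt m (l1 ++ y :: l2) js sg) (perms m)) with (Csum (Bt m (l1 ++ y :: l2) js) (perms m)) by reflexivity.
  replace (Csum (fun sg => Bt m (l1 ++ z :: l2) js sg) (perms m)) with (Csum (Bt m (l1 ++ z :: l2) js) (perms m)) by reflexivity. ring.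
  intros sg Hsg. apply Bt_lin; auto.
Qed.

Lemma Im_add z w : Im z = 0 -> Im w = 0 -> Im (Cadd z w) = 0.
Proof. unfold Cadd; simpl; lra. Qed.
Lemma Im_mul z w : Im z = 0 -> Im w = 0 -> Im (Cmul z w) = 0.
Proof. unfold Cmul; simpl; intros -> ->; ring. Qed.
Lemma Im_Csum {A} (f : A -> Cx) l : (forall x, In x l -> Im (f x) = 0) -> Im (Csum f l) = 0.
Proof. induction l; intros H; unfold Csum in *; simpl. auto. apply Im_add. apply H; left; auto. apply IHl; intros; apply H; right; auto. Qed.
Lemma Im_prodl f l : (forall x, In x l -> Im (f x) = 0) -> Im (prodl f l) = 0.
Proof. induction l; intros H; unfold prodl in *; simpl. auto. apply Im_mul. apply H; left; auto. apply IHl; intros; apply H; right; auto. Qed.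
Lemma Im_Cr r : Im (Cr r) = 0. Proof. reflexivity. Qed.

Lemma Tf_mlinear K n m a : (forall alpha, In alpha (multi n m) -> inK K (a alpha)) -> mlinear K n m (Tf n m a).
Proof.
  intros Ha. split.
  - intros X HX Hv. destruct K; [|exact I]; unfold inK. unfold Tf. apply Im_mul. apply Im_Cr.
    apply Im_Csum. intros js Hjs. apply Im_mul.
    + unfold cc. apply Im_mul. apply Im_Cr. apply (Ha _ (cntv_multi _ _ _ Hjs)).
    + apply Im_Csum. intros sg _. unfold Bt. apply Im_prodl. intros t _.
      destruct (nth_in_or_default (nth t sg 0%nat) X zv) as [Hin|Hd].
      * destruct (Hv _ Hin) as [H1 H2]. destruct (Nat.lt_ge_cases (nth t js 0%nat) n).
        apply (H1 _ H). rewrite H2 by auto. reflexivity.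
      * rewrite Hd. reflexivity.
  - intros l1 l2 y z c Hm _ _ _ _ _. apply Tf_lin; auto.
Qed.

Lemma exp_le x y : x <= y -> exp x <= exp y.
Proof. intros [H|H]. left; apply exp_increasing; auto. subst; lra. Qed.
Lemma ln_le0 x : 0 < x -> x <= 1 -> ln x <= 0.
Proof. intros H1 [H2|H2]. left; rewrite <- ln_1; apply ln_increasing; auto. subst; rewrite ln_1; lra. Qed.
Lemma ln_ge0 x : 1 <= x -> 0 <= ln x.
Proof. intros [H2|H2]. left; rewrite <- ln_1; apply ln_increasing; auto; lra. subst; rewrite ln_1; lra. Qed.

Lemma rpow_ge0 x y : 0 <= rpow x y.
Proof. unfold rpow; destruct (Rlt_dec 0 x). unfold Rpower; left; apply exp_pos. lra. Qed.
Lemma rpow_pos x y : 0 < x -> rpow x y = Rpower x y.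
Proof. intros; unfold rpow; destruct (Rlt_dec 0 x); tauto. Qed.
Lemma rpow_0 y : rpow 0 y = 0.
Proof. unfold rpow; destruct (Rlt_dec 0 0); lra. Qed.
Lemma rpow_gt0 x y : 0 < x -> 0 < rpow x y.
Proof. intros; rewrite rpow_pos by auto; unfold Rpower; apply exp_pos. Qed.
Lemma rpow_le_base a b y : 0 <= y -> 0 <= a <= b -> rpow a y <= rpow b y.
Proof.
  intros Hy [Ha Hab]. destruct (Req_dec a 0). subst; rewrite rpow_0; apply rpow_ge0.
  rewrite !rpow_pos by lra. apply Rle_Rpower_l; lra.
Qed.
Lemma rpow_mul a b y : 0 <= a -> 0 <= b -> rpow (a * b) y = rpow a y * rpow b y.
Proof.
  intros Ha Hb. destruct (Req_dec a 0). subst. rewrite Rmult_0_l, !rpow_0; ring.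
  destruct (Req_dec b 0). subst. rewrite Rmult_0_r, !rpow_0; ring.
  rewrite !rpow_pos by nra. rewrite Rpower_mult_distr; auto; lra.
Qed.
Lemma rpow_le1 x y : 0 <= y -> x <= 1 -> rpow x y <= 1.
Proof.
  intros Hy Hx. unfold rpow; destruct (Rlt_dec 0 x); [|lra]. unfold Rpower.
  rewrite <- exp_0. apply exp_le. pose proof (ln_le0 x r Hx). nra.
Qed.
Lemma rpow_le1_inv x y : 0 < y -> 1 < x -> 1 < rpow x y.
Proof.
  intros Hy Hx. rewrite rpow_pos by lra. unfold Rpower. rewrite <- exp_0. apply exp_increasing.
  assert (0 < ln x) by (rewrite <- ln_1; apply ln_increasing; lra). nra.
Qed.
Lemma rpow_rpow x y z : 0 <= x -> rpow (rpow x y) z = rpow x (y * z).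
Proof.
  intros Hx. destruct (Req_dec x 0). subst. rewrite !rpow_0; auto.
  rewrite (rpow_pos x) by lra. rewrite rpow_pos by (unfold Rpower; apply exp_pos). rewrite rpow_pos by lra.
  apply Rpower_mult.
Qed.
Lemma rpow_1 x : 0 <= x -> rpow x 1 = x.
Proof. intros H. destruct (Req_dec x 0). subst; apply rpow_0. rewrite rpow_pos by lra. apply Rpower_1; lra. Qed.
Lemma rpow_plus x y z : 0 < x -> rpow x (y + z) = rpow x y * rpow x z.
Proof. intros; rewrite !rpow_pos by auto. apply Rpower_plus. Qed.

Lemma bern p t : 1 <= p -> 0 <= t -> 1 + p * (t - 1) <= rpow t p.
Proof.
  intros Hp Ht. destruct (Req_dec t 0). subst. rewrite rpow_0. lra.
  assert (Htp : 0 < t) by (destruct Ht; auto; congruence).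
  rewrite rpow_pos by lra.
  assert (Hd : forall c, 0 < c -> derivable_pt_lim (fun x => Rpower x p) c (p * Rpower c (p - 1))).
  { intros; apply derivable_pt_lim_power; auto. }
  destruct (Rtotal_order t 1) as [Hlt|[Heq|Hgt]].
  - destruct (MVT_cor2 (fun x => Rpower x p) (fun c => p * Rpower c (p - 1)) t 1 Hlt) as [c [Hc1 Hc2]].
    { intros c Hc; apply Hd; lra. }
    simpl in Hc1.
    replace (Rpower 1 p) with 1 in Hc1 by (unfold Rpower; rewrite ln_1, Rmult_0_r, exp_0; auto).
    assert (Rpower c (p - 1) <= 1).
    { unfold Rpower. apply Rle_trans with (exp 0); [|rewrite exp_0; lra]. apply exp_le. pose proof (ln_le0 c ltac:(lra) ltac:(lra)). nra. }
    assert (0 <= Rpower c (p - 1)) by (unfold Rpower; left; apply exp_pos).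
    assert (0 <= p * (1 - t)) by nra.
    assert (p * Rpower c (p - 1) * (1 - t) <= p * (1 - t)) by nra. lra.
  - subst. unfold Rpower; rewrite ln_1, Rmult_0_r, exp_0. lra.
  - destruct (MVT_cor2 (fun x => Rpower x p) (fun c => p * Rpower c (p - 1)) 1 t Hgt) as [c [Hc1 Hc2]].
    { intros c Hc; apply Hd; lra. }
    simpl in Hc1.
    replace (Rpower 1 p) with 1 in Hc1 by (unfold Rpower; rewrite ln_1, Rmult_0_r, exp_0; auto).
    assert (1 <= Rpower c (p - 1)).
    { unfold Rpower. apply Rle_trans with (exp 0); [rewrite exp_0; lra|]. apply exp_le. pose proof (ln_ge0 c ltac:(lra)). nra. }
    assert (0 <= p * (t - 1)) by nra.
    assert (p * (t - 1) <= p * Rpower c (p - 1) * (t - 1)) by nra. lra.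
Qed.

Lemma jensen {A} (u : A -> R) (l : list A) p : 1 <= p -> (0 < length l)%nat -> (forall x, In x l -> 0 <= u x) ->
  rpow (/ INR (length l) * Rsum u l) p <= / INR (length l) * Rsum (fun x => rpow (u x) p) l.
Proof.
  intros Hp Hl Hu. set (k := INR (length l)).
  assert (Hk : 0 < k) by (apply lt_0_INR; auto).
  set (b := / k * Rsum u l).
  assert (Hb : 0 <= b) by (unfold b; apply Rmult_le_pos; [left; apply Rinv_0_lt_compat; auto| apply Rsum_nonneg; auto]).
  destruct (Req_dec b 0) as [Hb0|Hb0].
  - rewrite Hb0, rpow_0. apply Rmult_le_pos. left; apply Rinv_0_lt_compat; auto. apply Rsum_nonneg; intros; apply rpow_ge0.
  - assert (Hbp : 0 < b) by lra.
    assert (Hsum : Rsum (fun x => rpow (u x) p) l >= Rsum (fun x => rpow b p * (1 + p * (u x / b - 1))) l).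
    { apply Rle_ge, Rsum_le. intros x Hx. replace (rpow (u x) p) with (rpow (b * (u x / b)) p) by (f_equal; field; lra).
      assert (0 <= u x / b) by (apply Rmult_le_pos; [apply Hu; auto| left; apply Rinv_0_lt_compat; auto]).
      rewrite rpow_mul by lra.
      apply Rmult_le_compat_l. apply rpow_ge0. apply bern; auto. }
    rewrite <- Rsum_mul_l in Hsum.
    rewrite (Rsum_ext_in (fun x => 1 + p * (u x / b - 1)) (fun x => (1 - p) + (p / b) * u x)) in Hsum by (intros; field; lra).
    rewrite Rsum_add, Rsum_const, <- Rsum_mul_l in Hsum. fold k in Hsum.
    assert (Rsum u l = k * b) by (unfold b; field; lra). rewrite H in Hsum.
    replace (k * (1 - p) + p / b * (k * b)) with k in Hsum by (field; lra).
    apply Rmult_le_reg_l with k; auto. rewrite <- Rmult_assoc, Rinv_r, Rmult_1_l by lra. 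
    pose proof (rpow_ge0 b p). nra.
Qed.

Lemma Rsum_swap {A B} (f : A -> B -> R) l1 l2 :
  Rsum (fun x => Rsum (fun y => f x y) l2) l1 = Rsum (fun y => Rsum (fun x => f x y) l1) l2.
Proof. induction l1. symmetry. rewrite (Rsum_ext_in (fun y => Rsum (fun x => f x y) []) (fun _ => 0)) by (intros; reflexivity).
  rewrite Rsum_const. unfold Rsum; simpl; ring.
  unfold Rsum at 1; simpl; fold (Rsum (fun x => Rsum (fun y => f x y) l2) l1). rewrite IHl1.
  rewrite <- Rsum_add. apply Rsum_ext_in; intros; unfold Rsum; simpl; auto. Qed.

Lemma poly_homog n m a c y : poly_eval n m a (vscal c y) = Cmul (Cpow c m) (poly_eval n m a y).
Proof.
  unfold poly_eval. rewrite Csum_mul_l. apply Csum_ext_in. intros alpha Ha.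
  unfold monom. rewrite !monom_from_prodl. unfold vscal. rewrite prodl_scal.
  rewrite rep_from_length. apply multi_In in Ha. destruct Ha as [_ ->]. ring.
Qed.

Lemma Cabs_prodl_one f l : (forall x, In x l -> Cabs (f x) = 1) -> Cabs (prodl f l) = 1.
Proof. induction l; intros H; unfold prodl in *; simpl. apply Cabs_C1.
  rewrite Cabs_mul, H, IHl by (try (left; auto); intros; apply H; right; auto). ring. Qed.

Lemma Cabs_sgn e : Cabs (sgn e) = 1.
Proof. unfold sgn. destruct (Nat.eqb e 0). apply Cabs_C1. rewrite Cabs_Cr, Rabs_left by lra. lra. Qed.

Lemma Im_sgn e : Im (sgn e) = 0.
Proof. unfold sgn. destruct (Nat.eqb e 0); reflexivity. Qed.

Lemma lp_sum_le1 p n x : 0 < p -> lp_norm p n x <= 1 -> Rsum (fun j => rpow (Cabs (x j)) p) (seq 0 n) <= 1.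
Proof.
  intros Hp H. unfold lp_norm in H. destruct (Rle_or_lt (Rsum (fun j => rpow (Cabs (x j)) p) (seq 0 n)) 1); auto.
  exfalso. pose proof (rpow_le1_inv _ (1 / p) ltac:(apply Rdiv_lt_0_compat; lra) H0). lra.
Qed.

Lemma inK_of K z : (K = RealK -> Im z = 0) -> inK K z.
Proof. destruct K; simpl; auto. Qed.

Section Bound.
Variables (K : field_kind) (n m : nat) (p : R) (a : list nat -> Cx) (M : R) (X : list vec).
Hypothesis Hm : (1 <= m)%nat.
Hypothesis Hp : 1 <= p.
Hypothesis HXl : length X = m.
Hypothesis HX : forall x, In x X -> isvec K n x /\ lp_norm p n x <= 1.

Definition zc eps : vec := vscal (Cr (/ INR m)) (ycomb m eps X).

Lemma xi_props i : (i < m)%nat -> isvec K n (nth i X zv) /\ lp_norm p n (nth i X zv) <= 1.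
Proof using All. intros Hi. apply HX. apply nth_In. lia. Qed.

Lemma zc_isvec eps : isvec K n (zc eps).
Proof using All.
  split.
  - intros j Hj. apply inK_of. intros EK. unfold zc, vscal, ycomb. apply Im_mul. reflexivity.
    apply Im_Csum. intros i Hi. apply in_seq in Hi. apply Im_mul. apply Im_sgn.
    destruct (xi_props i ltac:(lia)) as [[H1 _] _]. pose proof (H1 j Hj) as H3. rewrite EK in H3. exact H3.
  - intros j Hj. unfold zc, vscal, ycomb.
    rewrite (Csum_ext_in _ (fun _ => C0)). rewrite Csum_zero. ring.
    intros i Hi. apply in_seq in Hi. destruct (xi_props i ltac:(lia)) as [[_ H2] _]. rewrite H2 by auto. ring.
Qed.

Lemma zc_norm eps : lp_norm p n (zc eps) <= 1.
Proof using All.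
  assert (HmR : 0 < INR m) by (apply lt_0_INR; lia).
  unfold lp_norm. apply rpow_le1. left; apply Rdiv_lt_0_compat; lra.
  set (u := fun i j => Cabs (nth i X zv j)).
  apply Rle_trans with (Rsum (fun j => / INR m * Rsum (fun i => rpow (u i j) p) (seq 0 m)) (seq 0 n)).
  - apply Rsum_le. intros j _.
    apply Rle_trans with (rpow (/ INR m * Rsum (fun i => u i j) (seq 0 m)) p).
    + apply rpow_le_base. lra. split. apply Cabs_ge0.
      unfold zc, vscal, ycomb. rewrite Cabs_mul, Cabs_Cr, Rabs_right by (left; apply Rinv_0_lt_compat; auto).
      apply Rmult_le_compat_l. left; apply Rinv_0_lt_compat; auto.
      eapply Rle_trans. apply Cabs_Csum. apply Rsum_le. intros i _. rewrite Cabs_mul, Cabs_sgn. unfold u; lra.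
    + pose proof (jensen (fun i => u i j) (seq 0 m) p Hp) as Hj. rewrite length_seq in Hj. apply Hj. lia.
      intros; apply Cabs_ge0.
  - rewrite <- Rsum_mul_l. rewrite Rsum_swap.
    apply Rle_trans with (/ INR m * Rsum (fun _ => 1) (seq 0 m)).
    apply Rmult_le_compat_l. left; apply Rinv_0_lt_compat; auto.
    apply Rsum_le. intros i Hi. apply in_seq in Hi. unfold u.
    apply lp_sum_le1. lra. apply xi_props; lia.
    rewrite Rsum_const, length_seq. right; field; lra.
Qed.

Lemma P_ycomb_bound eps : poly_bound K n p (poly_eval n m a) M ->
  Cabs (poly_eval n m a (ycomb m eps X)) <= INR m ^ m * M.
Proof using All.
  intros HP. assert (HmR : 0 < INR m) by (apply lt_0_INR; lia).
  assert (E : ycomb m eps X = vscal (Cr (INR m)) (zc eps)).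
  { apply functional_extensionality; intros j. unfold zc, vscal.
    transitivity (Cmul (Cmul (Cr (INR m)) (Cr (/ INR m))) (ycomb m eps X j)).
    rewrite <- Cr_mul, Rinv_r, Cr1 by lra. ring. ring. }
  rewrite E, poly_homog, Cabs_mul, Cpow_Cr, Cabs_Cr, Rabs_right.
  apply Rmult_le_compat_l. apply pow_le; lra. apply HP. apply zc_isvec. apply zc_norm.
  apply Rle_ge, pow_le; lra.
Qed.

End Bound.

Lemma Tf_bound K n m p a M : (1 <= m)%nat -> 1 <= p -> poly_bound K n p (poly_eval n m a) M ->
  mlin_bound K n m p (Tf n m a) (INR m ^ m / INR (fact m) * M).
Proof.
  intros Hm Hp HP X HXl HX.
  assert (HF : 0 < INR (fact m)) by (apply lt_0_INR, lt_O_fact).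
  assert (H2 : 0 < 2 ^ m) by (apply pow_lt; lra).
  pose proof (polar_full n m a X) as Hpol.
  assert (Hb : Cabs (Cmul (Cr (2 ^ m * INR (fact m))) (Tf n m a X)) <= 2 ^ m * (INR m ^ m * M)).
  { rewrite <- Hpol. eapply Rle_trans. apply Cabs_Csum.
    apply Rle_trans with (Rsum (fun _ => INR m ^ m * M) (tuples 2 m)).
    apply Rsum_le. intros eps _. rewrite Cabs_mul. unfold sprod. rewrite Cabs_prodl_one by (intros; apply Cabs_sgn).
    rewrite Rmult_1_l. apply (P_ycomb_bound K n m p a M X); auto.
    rewrite Rsum_const, tuples_length, pow_INR. replace (INR 2) with 2 by (simpl; lra). lra. }
  rewrite Cabs_mul, Cabs_Cr, Rabs_right in Hb by (apply Rle_ge; apply Rmult_le_pos; lra).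
  apply Rmult_le_reg_l with (2 ^ m * INR (fact m)). apply Rmult_lt_0_compat; lra.
  replace (2 ^ m * INR (fact m) * (INR m ^ m / INR (fact m) * M)) with (2 ^ m * (INR m ^ m * M)) by (field; lra).
  auto.
Qed.

Lemma rpow_anti x y e : 0 < x <= y -> e <= 0 -> rpow y e <= rpow x e.
Proof.
  intros [Hx Hxy] He. rewrite !rpow_pos by lra. unfold Rpower. apply exp_le.
  assert (ln x <= ln y). { destruct Hxy as [H|H]. left; apply ln_increasing; auto. subst; lra. }
  nra.
Qed.

Lemma rpow_inv x e : 0 < x -> rpow (/ x) e = rpow x (- e).
Proof. intros Hx. rewrite !rpow_pos by (try apply Rinv_0_lt_compat; auto). unfold Rpower.
  rewrite ln_Rinv by auto. f_equal; ring. Qed.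

Theorem lemma1 (K : field_kind) (m : nat) (p : R) (Cmult : R) :
  (2 <= m)%nat -> INR m < p -> p < 2 * INR m ->
  mult_admissible K m p Cmult ->
  forall (n : nat) (a : list nat -> Cx) (M : R),
    (1 <= n)%nat ->
    (forall alpha, In alpha (multi n m) -> inK K (a alpha)) ->
    poly_bound K n p (poly_eval n m a) M ->
    rpow (Rsum (fun alpha => rpow (Cabs (a alpha)) (p / (p - INR m))) (multi n m))
         ((p - INR m) / p)
    <= Cmult * (INR m ^ m / rpow (INR (fact m)) ((p - INR m) / p)) * M.
Proof.
  intros Hm2 Hmp Hp2 Hadm n a M Hn Ha HP.
  assert (HmR : 2 <= INR m) by (replace 2 with (INR 2) by (simpl; lra); apply le_INR; auto).
  set (q := p / (p - INR m)). set (r := (p - INR m) / p).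
  assert (Hpm : 0 < p - INR m) by lra.
  assert (Hq1 : 1 < q). { unfold q. apply Rmult_lt_reg_r with (p - INR m); auto. unfold Rdiv. rewrite Rmult_assoc, Rinv_l by lra. lra. }
  assert (Hr : 0 < r) by (unfold r; apply Rdiv_lt_0_compat; lra).
  assert (Hqr : q * r = 1) by (unfold q, r; field; lra).
  set (F := INR (fact m)).
  assert (HF : 1 <= F) by (unfold F; replace 1 with (INR 1) by auto; apply le_INR; apply lt_O_fact).
  pose proof (Hadm n (Tf n m a) (INR m ^ m / F * M) Hn (Tf_mlinear K n m a Ha)
               (Tf_bound K n m p a M ltac:(lia) ltac:(lra) HP)) as HA.
  fold q r in HA.
  rewrite (Rsum_ext_in _ (fun js => rpow (Cabs (cc n m a js)) q)) in HA
    by (intros js Hjs; rewrite Tf_unit; auto).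
  set (g := fun alpha => rpow (Cabs (Cmul (Cr (/ INR (Ncnt n m alpha))) (a alpha))) q).
  change (Rsum (fun js => rpow (Cabs (cc n m a js)) q) (tuples n m)) with (Rsum (fun js => g (cntv n js)) (tuples n m)) in HA.
  rewrite (Rsum_group (cntv n) g (tuples n m) (multi n m) (multi_NoDup n m) (fun js H => cntv_multi n m js H)) in HA.
  set (S := Rsum (fun alpha => rpow (Cabs (a alpha)) q) (multi n m)).
  set (S' := Rsum (fun b => INR (length (filter (fun x => dec (cntv n x = b)) (tuples n m))) * g b) (multi n m)) in HA.
  assert (HS0 : 0 <= S) by (apply Rsum_nonneg; intros; apply rpow_ge0).
  assert (HSS : rpow F (1 - q) * S <= S').
  { unfold S, S'. rewrite Rsum_mul_l. apply Rsum_le. intros alpha Hal.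
    fold (Ncnt n m alpha). unfold g.
    pose proof (Ncnt_ge1 n m alpha Hal) as H1. pose proof (Ncnt_le n m alpha Hal) as H2.
    apply le_INR in H1, H2. simpl in H1. fold F in H2. set (N := INR (Ncnt n m alpha)) in *.
    rewrite Cabs_mul, Cabs_Cr, Rabs_right by (apply Rle_ge; left; apply Rinv_0_lt_compat; lra).
    rewrite rpow_mul by (try apply Cabs_ge0; left; apply Rinv_0_lt_compat; lra).
    rewrite rpow_inv by lra.
    replace (N * (rpow N (- q) * rpow (Cabs (a alpha)) q)) with ((rpow N 1 * rpow N (- q)) * rpow (Cabs (a alpha)) q)
      by (rewrite rpow_1 by lra; ring).
    rewrite <- rpow_plus by lra.
    apply Rmult_le_compat_r. apply rpow_ge0.
    replace (1 + - q) with (1 - q) by ring. apply rpow_anti; lra. }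
  assert (HS : S <= rpow F (q - 1) * S').
  { apply Rle_trans with (rpow F (q - 1) * (rpow F (1 - q) * S)).
    rewrite <- Rmult_assoc, <- rpow_plus by lra. replace (q - 1 + (1 - q)) with 0 by ring.
    rewrite rpow_pos, Rpower_O by lra. lra.
    apply Rmult_le_compat_l. apply rpow_ge0. auto. }
  apply Rle_trans with (rpow (rpow F (q - 1) * S') r).
  apply rpow_le_base; lra.
  assert (HS'0 : 0 <= S') by (apply Rle_trans with (rpow F (1 - q) * S); auto; apply Rmult_le_pos; auto; apply rpow_ge0).
  rewrite rpow_mul by (try apply rpow_ge0; auto). rewrite rpow_rpow by lra.
  apply Rle_trans with (rpow F ((q - 1) * r) * (Cmult * (INR m ^ m / F * M))).
  apply Rmult_le_compat_l. apply rpow_ge0. auto.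
  assert (HFr : 0 < rpow F r) by (apply rpow_gt0; lra).
  assert (E : rpow F ((q - 1) * r) = F / rpow F r).
  { apply Rmult_eq_reg_r with (rpow F r). 2: lra. rewrite <- rpow_plus by lra.
    replace ((q - 1) * r + r) with 1 by (rewrite Rmult_minus_distr_r, Hqr; ring). rewrite rpow_1 by lra.
    field; lra. }
  rewrite E. right. field. split; lra.
Qed.
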